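(* Let $a>0$, $k_p,k_d>0$, $z_0=x_0+iy_0\in\mathbb{C}$, $N>\rho>0$, and let $A_{\rho,N}=\{(\ell_1,\ell_2)\in\mathbb{Z}^2:\rho a<|z_{\ell_1,\ell_2}|<Na\}$ where $z_{\ell_1,\ell_2}=(\ell_1a-x_0)+i(\ell_2a-y_0)$. With $\epsilon^{(i)},\epsilon^{(\pm)},\Delta^{(i)},\Delta^{d(i,\pm)},\Delta^{d(\pm)}$ as defined in the context, define for each $(\ell_1,\ell_2)$ $$F(\ell_1,\ell_2)=\tfrac12k_p\big((\Delta^{(1)})^2+(\Delta^{(2)})^2\big)+\tfrac12k_d\big((\Delta^{d(1,+)})^2+(\Delta^{d(2,+)})^2+(\Delta^{d(1,-)})^2+(\Delta^{d(2,-)})^2+(\Delta^{d(+)})^2+(\Delta^{d(-)})^2\big)$$ and the elastic energy $E_{\rho,N}(x_0,y_0)=\sum_{(\ell_1,\ell_2)\in A_{\rho,N}}F(\ell_1,\ell_2)$. Define the truncated Epstein–Hurwitz zeta value $$\zeta_{\rho,N}(2,-z_0/a)=\sum_{(\ell_1,\ell_2)\in A_{\rho,N}}\frac{1}{(\ell_1-x_0/a)^2+(\ell_2-y_0/a)^2}.$$ Then $$E_{\rho,N}(x_0,y_0)=\frac{1}{8\pi^2}k_da^2\,\zeta_{\rho,N}(2,-z_0/a)+\sum_{(\ell_1,\ell_2)\in A_{\rho,N}}r(\ell_1,\ell_2),$$ where $r(\ell_1,\ell_2)=F(\ell_1,\ell_2)-\frac{k_d}{8\pi^2}\frac{a^4}{|z_{\ell_1,\ell_2}|^2}$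 satisfies $r(\ell_1,\ell_2)\,|z_{\ell_1,\ell_2}|^2/a^2\to0$ as $|z_{\ell_1,\ell_2}|\to\infty$ (with $a,x_0,y_0,k_p,k_d$ fixed); i.e. up to terms of higher order in $a^2/|z_{\ell_1,\ell_2}|^2$ the energy equals $\frac{1}{8\pi^2}k_da^2\zeta_{\rho,N}(2,-z_0/a)$.
   Context: Notation for a single screw dislocation in the simple cubic lattice with spacing $a$: $s(\ell_1,\ell_2)=z_{\ell_1,\ell_2}/|z_{\ell_1,\ell_2}|$; $\epsilon^{(1)}=\frac{a}{2\pi}\operatorname{Arg}\frac{s(\ell_1+1,\ell_2)}{s(\ell_1,\ell_2)}$, $\epsilon^{(2)}=\frac{a}{2\pi}\operatorname{Arg}\frac{s(\ell_1,\ell_2+1)}{s(\ell_1,\ell_2)}$, $\epsilon^{(\pm)}=\frac{a}{2\pi}\operatorname{Arg}\frac{s(\ell_1+1,\ell_2\pm1)}{s(\ell_1,\ell_2)}$ with $\operatorname{Arg}$ the principal argument in $(-\pi,\pi]$; for $i=1,2$: $\Delta^{(i)}=\sqrt{a^2+(\epsilon^{(i)})^2}-a$, $\Delta^{d(i,\pm)}=\sqrt{(a\pm\epsilon^{(i)})^2+a^2}-\sqrt2a$, $\Delta^{d(\pm)}=\sqrt{2a^2+(\epsilon^{(\pm)})^2}-\sqrt2a$ (all evaluated at $(\ell_1,\ell_2)$). $k_p$ and $k_d$ are the spring constants of the axis-parallel and diagonal springs respectively; the vertical springs have zero length change. *)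

(* Defs.v *)
From Stdlib Require Import Reals ZArith.
Open Scope R_scope.

(* Principal argument of the complex number x + i y, in (-PI, PI];
   convention Arg 0 = 0 (never used in the statement for nonzero values). *)
Definition Arg (x y : R) : R :=
  if Rlt_dec 0 x then atan (y / x)
  else if Rlt_dec x 0 then
    (if Rle_dec 0 y then atan (y / x) + PI else atan (y / x) - PI)
  else if Rlt_dec 0 y then PI / 2
  else if Rlt_dec y 0 then - (PI / 2)
  else 0.

Definition cdiv_re (u1 u2 v1 v2 : R) : R := (u1 * v1 + u2 * v2) / (v1 ^ 2 + v2 ^ 2).
Definition cdiv_im (u1 u2 v1 v2 : R) : R := (u2 * v1 - u1 * v2) / (v1 ^ 2 + v2 ^ 2).

Definition zre (a x0 : R) (l1 : Z) : R := IZR l1 * a - x0.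
Definition zim (a y0 : R) (l2 : Z) : R := IZR l2 * a - y0.
Definition modz (a x0 y0 : R) (l1 l2 : Z) : R :=
  sqrt (zre a x0 l1 ^ 2 + zim a y0 l2 ^ 2).

Definition sre (a x0 y0 : R) (l1 l2 : Z) : R := zre a x0 l1 / modz a x0 y0 l1 l2.
Definition sim (a x0 y0 : R) (l1 l2 : Z) : R := zim a y0 l2 / modz a x0 y0 l1 l2.

Definition epsgen (a x0 y0 : R) (m1 m2 l1 l2 : Z) : R :=
  a / (2 * PI) *
  Arg (cdiv_re (sre a x0 y0 m1 m2) (sim a x0 y0 m1 m2) (sre a x0 y0 l1 l2) (sim a x0 y0 l1 l2))
      (cdiv_im (sre a x0 y0 m1 m2) (sim a x0 y0 m1 m2) (sre a x0 y0 l1 l2) (sim a x0 y0 l1 l2)).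

Definition eps1 a x0 y0 l1 l2 := epsgen a x0 y0 (l1 + 1)%Z l2 l1 l2.
Definition eps2 a x0 y0 l1 l2 := epsgen a x0 y0 l1 (l2 + 1)%Z l1 l2.
Definition epsp a x0 y0 l1 l2 := epsgen a x0 y0 (l1 + 1)%Z (l2 + 1)%Z l1 l2.
Definition epsm a x0 y0 l1 l2 := epsgen a x0 y0 (l1 + 1)%Z (l2 - 1)%Z l1 l2.

Definition Dax (a e : R) : R := sqrt (a ^ 2 + e ^ 2) - a.
Definition Ddp (a e : R) : R := sqrt ((a + e) ^ 2 + a ^ 2) - sqrt 2 * a.
Definition Ddm (a e : R) : R := sqrt ((a - e) ^ 2 + a ^ 2) - sqrt 2 * a.
Definition Ddd (a e : R) : R := sqrt (2 * a ^ 2 + e ^ 2) - sqrt 2 * a.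

Definition F (a kp kd x0 y0 : R) (l1 l2 : Z) : R :=
  let e1 := eps1 a x0 y0 l1 l2 in
  let e2 := eps2 a x0 y0 l1 l2 in
  let ep := epsp a x0 y0 l1 l2 in
  let em := epsm a x0 y0 l1 l2 in
  1 / 2 * kp * (Dax a e1 ^ 2 + Dax a e2 ^ 2)
  + 1 / 2 * kd * (Ddp a e1 ^ 2 + Ddp a e2 ^ 2 + Ddm a e1 ^ 2 + Ddm a e2 ^ 2
                  + Ddd a ep ^ 2 + Ddd a em ^ 2).

Definition r (a kp kd x0 y0 : R) (l1 l2 : Z) : R :=
  F a kp kd x0 y0 l1 l2 - kd / (8 * PI ^ 2) * (a ^ 4 / modz a x0 y0 l1 l2 ^ 2).

Definition inA (a x0 y0 rho N : R) (l1 l2 : Z) : bool :=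
  if Rlt_dec (rho * a) (modz a x0 y0 l1 l2) then
    if Rlt_dec (modz a x0 y0 l1 l2) (N * a) then true else false
  else false.

Fixpoint sumZ (f : Z -> R) (m : Z) (n : nat) : R :=
  match n with
  | O => 0
  | S k => f m + sumZ f (m + 1)%Z k
  end.

(* Sum over the finite set A_{rho,N}: summing the indicator-weighted terms over a
   box of integers which contains A_{rho,N} (for a > 0): indices l with
   |l a - c| < N a lie in (c/a - N, c/a + N), which is contained in
   [up(c/a - N) - 1, up(c/a - N) - 1 + 2 up(N) + 1]. *)
Definition boxlo (a c N : R) : Z := (up (c / a - N) - 1)%Z.
Definition boxlen (N : R) : nat := Z.to_nat (2 * up N + 2).

Definition sumA (a x0 y0 rho N : R) (f : Z -> Z -> R) : R :=
  sumZ (fun l1 =>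
          sumZ (fun l2 => if inA a x0 y0 rho N l1 l2 then f l1 l2 else 0)
               (boxlo a y0 N) (boxlen N))
       (boxlo a x0 N) (boxlen N).

Definition E (a kp kd x0 y0 rho N : R) : R := sumA a x0 y0 rho N (F a kp kd x0 y0).

Definition zeta (a x0 y0 rho N : R) : R :=
  sumA a x0 y0 rho N
    (fun l1 l2 => 1 / ((IZR l1 - x0 / a) ^ 2 + (IZR l2 - y0 / a) ^ 2)).

(* Main.v *)
Require Import Defs.
From Stdlib Require Import Reals ZArith.
From Stdlib Require Import Lra Psatz.
Open Scope R_scope.


Lemma Rabs_le_inv' x b : Rabs x <= b -> - b <= x <= b.
Proof.
  intros H. pose proof (Rle_abs x). pose proof (Rle_abs (- x)). rewrite Rabs_Ropp in H1. lra.
Qed.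

Lemma atan_approx_aux u k : 0 < k <= 1 -> 1 - k <= u ^ 2 -> atan u = u * k ->
  Rabs (atan u) <= Rabs u /\ Rabs (atan u - u) <= Rabs u ^ 3.
Proof.
  intros Hk Hk2 Ha. rewrite Ha.
  replace (u * k - u) with (u * (-(1 - k))) by ring.
  rewrite !Rabs_mult, (Rabs_right k) by lra.
  rewrite Rabs_Ropp, (Rabs_right (1 - k)) by lra.
  assert (0 <= Rabs u) by apply Rabs_pos.
  assert (Rabs u ^ 2 = u ^ 2) by (rewrite <- Rsqr_pow2 at 1; rewrite <- Rsqr_abs; unfold Rsqr; ring).
  split; [nra|]. replace (Rabs u ^ 3) with (Rabs u * Rabs u ^ 2) by ring. nra.
Qed.

Lemma atan_approx u : Rabs (atan u) <= Rabs u /\ Rabs (atan u - u) <= Rabs u ^ 3.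
Proof.
  destruct (Rtotal_order u 0) as [Hu|[Hu|Hu]].
  - destruct (MVT_cor2 atan (fun x => / (1 + x ^ 2)) u 0 Hu) as [c [Hc Hc2]].
    { intros c _; apply derivable_pt_lim_atan. }
    rewrite atan_0 in Hc.
    assert (Hp : 0 < 1 + c ^ 2) by nra.
    apply (atan_approx_aux u (/ (1 + c ^ 2))).
    + split; [apply Rinv_0_lt_compat; lra|]. rewrite <- Rinv_1. apply Rinv_le_contravar; nra.
    + assert (c ^ 2 <= u ^ 2) by nra.
      assert (1 - / (1 + c ^ 2) = c ^ 2 / (1 + c ^ 2)) by (field; lra).
      rewrite H0.
      assert (0 <= c ^ 2 * c ^ 2 / (1 + c ^ 2)) by (unfold Rdiv; apply Rmult_le_pos; [nra| left; apply Rinv_0_lt_compat; lra]).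
      assert (c ^ 2 / (1 + c ^ 2) = c ^ 2 - c ^ 2 * c ^ 2 / (1 + c ^ 2)) by (field; lra).
      lra.
    + lra.
  - subst. rewrite atan_0. rewrite Rminus_0_r, Rabs_R0. split; [lra|]. simpl; nra.
  - destruct (MVT_cor2 atan (fun x => / (1 + x ^ 2)) 0 u Hu) as [c [Hc Hc2]].
    { intros c _; apply derivable_pt_lim_atan. }
    rewrite atan_0 in Hc.
    assert (Hp : 0 < 1 + c ^ 2) by nra.
    apply (atan_approx_aux u (/ (1 + c ^ 2))).
    + split; [apply Rinv_0_lt_compat; lra|]. rewrite <- Rinv_1. apply Rinv_le_contravar; nra.
    + assert (c ^ 2 <= u ^ 2) by nra.
      assert (1 - / (1 + c ^ 2) = c ^ 2 / (1 + c ^ 2)) by (field; lra).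
      rewrite H0.
      assert (0 <= c ^ 2 * c ^ 2 / (1 + c ^ 2)) by (unfold Rdiv; apply Rmult_le_pos; [nra| left; apply Rinv_0_lt_compat; lra]).
      assert (c ^ 2 / (1 + c ^ 2) = c ^ 2 - c ^ 2 * c ^ 2 / (1 + c ^ 2)) by (field; lra).
      lra.
    + lra.
Qed.
Lemma sqrt2_facts : 1 <= sqrt 2 /\ sqrt 2 * sqrt 2 = 2.
Proof.
  split. rewrite <- sqrt_1. apply sqrt_le_1_alt. lra. apply sqrt_sqrt. lra.
Qed.

Lemma Dax_bound a e : 0 < a -> Dax a e ^ 2 <= e ^ 4 / a ^ 2.
Proof.
  intros Ha. unfold Dax.
  set (s := sqrt (a ^ 2 + e ^ 2)).
  assert (Hs2 : s * s = a ^ 2 + e ^ 2) by (apply sqrt_sqrt; nra).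
  assert (Hs0 : 0 <= s) by apply sqrt_pos.
  assert (Hsa : a <= s) by nra.
  apply Rmult_le_reg_r with (a ^ 2). nra.
  unfold Rdiv. rewrite Rmult_assoc, Rinv_l by nra. rewrite Rmult_1_r.
  assert (e ^ 4 = (s - a) ^ 2 * (s + a) ^ 2).
  { transitivity ((s * s - a ^ 2) ^ 2); [rewrite Hs2; ring | ring]. }
  rewrite H. assert (0 <= (s - a) ^ 2) by nra.
  apply Rmult_le_compat_l; [lra|]. nra.
Qed.

Lemma Ddd_bound a e : 0 < a -> Ddd a e ^ 2 <= e ^ 4 / a ^ 2.
Proof.
  intros Ha. unfold Ddd. destruct sqrt2_facts as [H1 H2].
  set (s := sqrt (2 * a ^ 2 + e ^ 2)). set (c := sqrt 2 * a).
  assert (Hs2 : s * s = 2 * a ^ 2 + e ^ 2) by (apply sqrt_sqrt; nra).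
  assert (Hs0 : 0 <= s) by apply sqrt_pos.
  assert (Hc2 : c * c = 2 * a ^ 2) by (unfold c; nra).
  assert (Hca : a <= c) by (unfold c; nra).
  assert (Hsa : c <= s) by nra.
  apply Rmult_le_reg_r with (a ^ 2). nra.
  unfold Rdiv. rewrite Rmult_assoc, Rinv_l by nra. rewrite Rmult_1_r.
  assert (e ^ 4 = (s - c) ^ 2 * (s + c) ^ 2).
  { transitivity ((s * s - c * c) ^ 2); [rewrite Hs2, Hc2; ring | ring]. }
  rewrite H. assert (0 <= (s - c) ^ 2) by nra.
  apply Rmult_le_compat_l; [lra|]. nra.
Qed.

Lemma Ddpm_bound a e : 0 < a ->
  Rabs (Ddp a e ^ 2 + Ddm a e ^ 2 - e ^ 2) <= 3 * e ^ 4 / a ^ 2.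
Proof.
  intros Ha. unfold Ddp, Ddm. destruct sqrt2_facts as [H1 H2].
  set (p := sqrt ((a + e) ^ 2 + a ^ 2)). set (q := sqrt ((a - e) ^ 2 + a ^ 2)).
  set (s := sqrt 2).
  assert (Hs1 : 1 <= s) by exact H1. assert (Hss : s * s = 2) by exact H2. clearbody s. clear H1 H2.
  assert (Hp2 : p * p = (a + e) ^ 2 + a ^ 2) by (apply sqrt_sqrt; nra).
  assert (Hq2 : q * q = (a - e) ^ 2 + a ^ 2) by (apply sqrt_sqrt; nra).
  assert (Hp0 : 0 <= p) by apply sqrt_pos.
  assert (Hq0 : 0 <= q) by apply sqrt_pos.
  set (g := p * q).
  assert (Hg0 : 0 <= g) by (unfold g; nra).
  assert (Hgg : g * g = 4 * a ^ 4 + e ^ 4) by (unfold g; transitivity ((p*p)*(q*q)); [ring|]; rewrite Hp2, Hq2; ring).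
  assert (Hg1 : 2 * a ^ 2 <= g) by nra.
  assert (Hg2 : 4 * a ^ 2 * (g - 2 * a ^ 2) <= e ^ 4) by nra.
  set (U := 8 * a ^ 2 + e ^ 2). set (V := 2 * s * a * (p + q)).
  assert (HV0 : 0 <= V). { unfold V. repeat apply Rmult_le_pos; lra. }
  assert (HVV : V * V = 32 * a ^ 4 + 16 * a ^ 2 * e ^ 2 + 16 * a ^ 2 * g).
  { unfold V. transitivity (4 * (s * s) * a ^ 2 * (p * p + q * q + 2 * g)). unfold g; ring.
    rewrite Hss, Hp2, Hq2. ring. }
  assert (HUU : U * U = 64 * a ^ 4 + 16 * a ^ 2 * e ^ 2 + e ^ 4) by (unfold U; ring).
  assert (Heq : (p - s * a) ^ 2 + (q - s * a) ^ 2 - e ^ 2 = U - V).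
  { unfold U, V. transitivity (p*p + q*q + 2 * (s * s) * a ^ 2 - 2 * s * a * (p + q) - e ^ 2). ring.
    rewrite Hp2, Hq2, Hss. ring. }
  rewrite Heq.
  assert (HU : 8 * a ^ 2 <= U) by (unfold U; nra).
  assert (Hdiff : Rabs (U - V) * (U + V) <= 3 * e ^ 4).
  { replace (Rabs (U - V) * (U + V)) with (Rabs ((U - V) * (U + V))).
    2:{ rewrite Rabs_mult, (Rabs_right (U + V)) by nra. reflexivity. }
    apply Rabs_le. split; nra. }
  assert (0 <= Rabs (U - V)) by apply Rabs_pos.
  apply Rmult_le_reg_r with (a ^ 2). nra.
  unfold Rdiv. rewrite Rmult_assoc, Rinv_l by nra. rewrite Rmult_1_r.
  nra.
Qed.
Lemma modz_facts a x0 y0 l1 l2 :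
  let R := modz a x0 y0 l1 l2 in
  R * R = zre a x0 l1 ^ 2 + zim a y0 l2 ^ 2 /\ 0 <= R.
Proof.
  simpl. unfold modz. split. apply sqrt_sqrt. nra. apply sqrt_pos.
Qed.

Lemma abs_le_of_sq X Y R : 0 <= R -> R * R = X ^ 2 + Y ^ 2 -> Rabs X <= R /\ Rabs Y <= R.
Proof.
  intros H0 H. split; apply Rabs_le; split; nra.
Qed.


Lemma epsgen_formula a x0 y0 m1 m2 l1 l2 d1 d2 :
  0 < a -> -1 <= d1 <= 1 -> -1 <= d2 <= 1 ->
  zre a x0 m1 = zre a x0 l1 + d1 * a -> zim a y0 m2 = zim a y0 l2 + d2 * a ->
  4 * a <= modz a x0 y0 l1 l2 ->
  epsgen a x0 y0 m1 m2 l1 l2 =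
  a / (2 * PI) * atan (a * (d2 * zre a x0 l1 - d1 * zim a y0 l2) /
      (modz a x0 y0 l1 l2 ^ 2 + a * (d1 * zre a x0 l1 + d2 * zim a y0 l2))).
Proof.
  intros Ha Hd1 Hd2 Hm1 Hm2 HR.
  unfold epsgen, cdiv_re, cdiv_im, sre, sim.
  destruct (modz_facts a x0 y0 l1 l2) as [HRR HR0].
  destruct (modz_facts a x0 y0 m1 m2) as [HRm HRm0].
  revert HRR HR0 HRm HRm0 HR.
  rewrite Hm1, Hm2.
  generalize (modz a x0 y0 l1 l2) (modz a x0 y0 m1 m2) (zre a x0 l1) (zim a y0 l2).
  intros R Rm X Y HRR HR0 HRm HRm0 HR.
  destruct (abs_le_of_sq X Y R HR0 HRR) as [HX HY].
  assert (HdX : Rabs (d1 * X) <= R).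
  { rewrite Rabs_mult. assert (Rabs d1 <= 1) by (apply Rabs_le; lra).
    assert (0 <= Rabs X) by apply Rabs_pos. nra. }
  assert (HdY : Rabs (d2 * Y) <= R).
  { rewrite Rabs_mult. assert (Rabs d2 <= 1) by (apply Rabs_le; lra).
    assert (0 <= Rabs Y) by apply Rabs_pos. nra. }
  apply Rabs_le_inv' in HdX. apply Rabs_le_inv' in HdY.
  set (Nm := R ^ 2 + a * (d1 * X + d2 * Y)).
  assert (HN : 0 < Nm) by (unfold Nm; nra).
  assert (HNe : (X + d1 * a) * X + (Y + d2 * a) * Y = Nm) by (unfold Nm; nra).
  assert (HRp : 0 < R) by lra.
  assert (HRmp : 0 < Rm).
  { destruct HRm0 as [|H0]; auto. exfalso.
    subst Rm. assert (HA := Rle_0_sqr (X + d1 * a)). assert (HB := Rle_0_sqr (Y + d2 * a)).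
    rewrite <- !Rsqr_pow2 in HRm.
    assert (X + d1 * a = 0) by (apply Rsqr_eq_0; lra). assert (Y + d2 * a = 0) by (apply Rsqr_eq_0; lra).
    rewrite H, H0 in HNe. lra. }
  assert (Hden : (X / R) ^ 2 + (Y / R) ^ 2 = 1).
  { field_simplify_eq; [|lra]. nra. }
  rewrite !Hden.
  assert (Hre : ((X + d1 * a) / Rm * (X / R) + (Y + d2 * a) / Rm * (Y / R)) / 1 = Nm / (Rm * R)).
  { rewrite <- HNe. field. lra. }
  rewrite Hre.
  assert (Hpos : 0 < Nm / (Rm * R)).
  { apply Rdiv_lt_0_compat; nra. }
  unfold Arg. destruct (Rlt_dec 0 (Nm / (Rm * R))) as [_|Hc]; [|lra].
  f_equal. f_equal. fold Nm. field_simplify_eq; try lra.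
Qed.

Lemma div_bound x D c : 0 < D -> Rabs x <= c * D -> Rabs (x / D) <= c.
Proof.
  intros HD H. apply Rmult_le_reg_r with D; auto.
  replace (Rabs (x / D) * D) with (Rabs x); auto.
  replace x with (x / D * D) at 1 by (field; lra).
  rewrite Rabs_mult, (Rabs_pos_eq D) by lra. reflexivity.
Qed.

Lemma u_bound a R X Y d1 d2 : 0 < a -> 4 * a <= R -> R * R = X ^ 2 + Y ^ 2 ->
  -1 <= d1 <= 1 -> -1 <= d2 <= 1 ->
  Rabs (a * (d2 * X - d1 * Y) / (R ^ 2 + a * (d1 * X + d2 * Y))) <= 4 * a / R.
Proof.
  intros Ha HR HRR Hd1 Hd2.
  assert (HX : Rabs X <= R) by (apply Rabs_le; split; nra).
  assert (HY : Rabs Y <= R) by (apply Rabs_le; split; nra).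
  apply Rabs_le_inv' in HX. apply Rabs_le_inv' in HY.
  assert (H1 : - R <= d1 * X <= R) by (split; nra).
  assert (H2 : - R <= d2 * Y <= R) by (split; nra).
  assert (H3 : - R <= d2 * X <= R) by (split; nra).
  assert (H4 : - R <= d1 * Y <= R) by (split; nra).
  assert (HD : R ^ 2 / 2 <= R ^ 2 + a * (d1 * X + d2 * Y)) by nra.
  apply div_bound. nra.
  apply Rabs_le.
  assert (E : 4 * a / R * (R ^ 2 + a * (d1 * X + d2 * Y)) = 4 * a * R + 4 * a * a * (d1 * X + d2 * Y) / R)
    by (field; lra).
  rewrite E.
  assert (E2 : 4 * a * a * (d1 * X + d2 * Y) / R >= - 8 * a * a).
  { assert (- 2 * R <= d1 * X + d2 * Y) by lra.
    replace (- 8 * a * a) with (4 * a * a * (- 2 * R) / R) by (field; lra).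
    apply Rle_ge. unfold Rdiv. apply Rmult_le_compat_r. left; apply Rinv_0_lt_compat; lra.
    apply Rmult_le_compat_l; nra. }
  split; nra.
Qed.

Lemma sq_approx a R D Z : 0 < a -> 4 * a <= R -> Rabs (D - R ^ 2) <= a * R -> Rabs Z <= R ->
  Rabs ((a * Z / D) ^ 2 - a ^ 2 * Z ^ 2 / R ^ 4) <= 4 * a ^ 3 / R ^ 3.
Proof.
  intros Ha HR HD HZ.
  apply Rabs_le_inv' in HD. apply Rabs_le_inv' in HZ.
  assert (HRp : 0 < R) by lra.
  assert (HD0 : 3 * R ^ 2 / 4 <= D) by nra.
  assert (HDp : 0 < D) by nra.
  set (A := a * Z / D). set (B := a * Z / R ^ 2).
  assert (E : A ^ 2 - a ^ 2 * Z ^ 2 / R ^ 4 = (A - B) * (A + B)) by (unfold A, B; field; lra).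
  rewrite E, Rabs_mult.
  assert (HAB : Rabs (A - B) <= 4 / 3 * (a ^ 2 / R ^ 2)).
  { assert (A - B = (a * Z * (R ^ 2 - D)) / (D * R ^ 2)) by (unfold A, B; field; lra).
    rewrite H. apply div_bound. apply Rmult_lt_0_compat; [lra | apply pow_lt; lra].
    rewrite Rabs_mult. apply Rle_trans with (Rabs (a * Z) * (a * R)).
    apply Rmult_le_compat_l. apply Rabs_pos. apply Rabs_le; lra.
    rewrite Rabs_mult, (Rabs_pos_eq a) by lra.
    assert (Rabs Z <= R) by (apply Rabs_le; lra).
    assert (0 <= Rabs Z) by apply Rabs_pos.
    replace (4 / 3 * (a ^ 2 / R ^ 2) * (D * R ^ 2)) with (4 / 3 * a ^ 2 * D) by (field; lra).
    apply Rle_trans with (a * R * (a * R)).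
    apply Rmult_le_compat_r. nra. apply Rmult_le_compat_l; lra.
    assert (4 / 3 * a ^ 2 * D - a * R * (a * R) = 4 / 3 * a ^ 2 * (D - 3 * R ^ 2 / 4)) by field.
    assert (0 <= 4 / 3 * a ^ 2 * (D - 3 * R ^ 2 / 4)) by (apply Rmult_le_pos; nra).
    lra. }
  assert (HA : Rabs A <= 4 / 3 * (a / R)).
  { unfold A. apply div_bound. lra. rewrite Rabs_mult, (Rabs_pos_eq a) by lra.
    assert (Rabs Z <= R) by (apply Rabs_le; lra). assert (0 <= Rabs Z) by apply Rabs_pos.
    replace (4 / 3 * (a / R) * D) with (4 / 3 * a * D / R) by (field; lra).
    apply Rmult_le_reg_r with R; auto.
    replace (4 / 3 * a * D / R * R) with (4 / 3 * a * D) by (field; lra). nra. }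
  assert (HB : Rabs B <= a / R).
  { unfold B. apply div_bound. nra. rewrite Rabs_mult, (Rabs_pos_eq a) by lra.
    assert (Rabs Z <= R) by (apply Rabs_le; lra). assert (0 <= Rabs Z) by apply Rabs_pos.
    replace (a / R * R ^ 2) with (a * R) by (field; lra). nra. }
  assert (HApB : Rabs (A + B) <= 7 / 3 * (a / R)).
  { eapply Rle_trans. apply Rabs_triang. lra. }
  assert (0 <= a / R) by (unfold Rdiv; apply Rmult_le_pos; [lra| left; apply Rinv_0_lt_compat; lra]).
  assert (0 <= a ^ 2 / R ^ 2) by (unfold Rdiv; apply Rmult_le_pos; [nra| left; apply Rinv_0_lt_compat; nra]).
  apply Rle_trans with (4 / 3 * (a ^ 2 / R ^ 2) * (7 / 3 * (a / R))).
  apply Rmult_le_compat; auto using Rabs_pos.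
  replace (4 / 3 * (a ^ 2 / R ^ 2) * (7 / 3 * (a / R))) with (28 / 9 * (a ^ 3 / R ^ 3)) by (field; lra).
  replace (4 * a ^ 3 / R ^ 3) with (4 * (a ^ 3 / R ^ 3)) by (field; lra).
  assert (0 <= a ^ 3 / R ^ 3) by (unfold Rdiv; apply Rmult_le_pos; [nra| left; apply Rinv_0_lt_compat; nra]).
  lra.
Qed.
Ltac nra' := repeat match goal with x := _ : _ |- _ => clearbody x end; nra.

Lemma PI_gt2 : 2 < PI.
Proof. pose proof PI2_1. lra. Qed.

Lemma e4_bound a t e : 0 < a -> 0 <= t -> Rabs e <= a * t -> e ^ 4 / a ^ 2 <= a ^ 2 * t ^ 4.
Proof.
  intros Ha Ht He. apply Rabs_le_inv' in He.
  assert (H2 : e ^ 2 <= a ^ 2 * t ^ 2) by nra.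
  assert (H0 : 0 <= e ^ 2) by nra.
  assert (H4 : e ^ 4 <= a ^ 4 * t ^ 4).
  { replace (e ^ 4) with (e ^ 2 * e ^ 2) by ring.
    replace (a ^ 4 * t ^ 4) with ((a ^ 2 * t ^ 2) * (a ^ 2 * t ^ 2)) by ring.
    apply Rmult_le_compat; lra. }
  apply Rmult_le_reg_r with (a ^ 2). nra.
  replace (e ^ 4 / a ^ 2 * a ^ 2) with (e ^ 4) by (field; lra).
  replace (a ^ 2 * t ^ 4 * a ^ 2) with (a ^ 4 * t ^ 4) by ring. lra.
Qed.

Lemma e_bound a t u : 0 < a -> Rabs u <= 4 * t -> Rabs (a / (2 * PI) * atan u) <= a * t.
Proof.
  intros Ha Hu. pose proof PI_gt2.
  destruct (atan_approx u) as [H1 _].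
  rewrite Rabs_mult, (Rabs_pos_eq (a / (2 * PI))).
  2:{ unfold Rdiv. apply Rmult_le_pos; [lra|left; apply Rinv_0_lt_compat; lra]. }
  apply Rle_trans with (a / (2 * PI) * (4 * t)).
  apply Rmult_le_compat_l; [unfold Rdiv; apply Rmult_le_pos; [lra|left; apply Rinv_0_lt_compat; lra]|lra].
  assert (0 <= t) by (pose proof (Rabs_pos u); lra).
  replace (a / (2 * PI) * (4 * t)) with (a * t * (2 / PI)) by (field; lra).
  rewrite <- (Rmult_1_r (a * t)) at 2. apply Rmult_le_compat_l. nra.
  apply Rmult_le_reg_r with PI. lra. replace (2 / PI * PI) with 2 by (field; lra). lra.
Qed.

Lemma atan_sq_bound u t : Rabs u <= 4 * t -> Rabs (atan u ^ 2 - u ^ 2) <= 512 * t ^ 4.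
Proof.
  intros Hu. destruct (atan_approx u) as [H1 H2].
  replace (atan u ^ 2 - u ^ 2) with ((atan u - u) * (atan u + u)) by ring.
  rewrite Rabs_mult.
  assert (H3 : Rabs (atan u + u) <= 2 * Rabs u) by (eapply Rle_trans; [apply Rabs_triang|lra]).
  assert (0 <= Rabs u) by apply Rabs_pos.
  apply Rle_trans with (Rabs u ^ 3 * (2 * Rabs u)).
  apply Rmult_le_compat; auto using Rabs_pos.
  replace (Rabs u ^ 3 * (2 * Rabs u)) with (2 * (Rabs u * Rabs u) * (Rabs u * Rabs u)) by ring.
  replace (512 * t ^ 4) with (2 * ((4 * t) * (4 * t)) * ((4 * t) * (4 * t))) by ring.
  assert (Rabs u * Rabs u <= 4 * t * (4 * t)) by (apply Rmult_le_compat; lra).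
  assert (0 <= Rabs u * Rabs u) by nra.
  apply Rmult_le_compat; nra.
Qed.

Lemma key a kp kd t u1 u2 e1 e2 ep em :
  0 < a -> 0 < t <= 1 / 4 -> 0 < kp -> 0 < kd ->
  e1 = a / (2 * PI) * atan u1 -> e2 = a / (2 * PI) * atan u2 ->
  Rabs u1 <= 4 * t -> Rabs u2 <= 4 * t -> Rabs ep <= a * t -> Rabs em <= a * t ->
  Rabs (u1 ^ 2 + u2 ^ 2 - t ^ 2) <= 8 * t ^ 3 ->
  Rabs (1 / 2 * kp * (Dax a e1 ^ 2 + Dax a e2 ^ 2)
        + 1 / 2 * kd * (Ddp a e1 ^ 2 + Ddp a e2 ^ 2 + Ddm a e1 ^ 2 + Ddm a e2 ^ 2
                        + Ddd a ep ^ 2 + Ddd a em ^ 2)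
        - kd / (8 * PI ^ 2) * (a ^ 2 * t ^ 2)) <= (kp + 10 * kd) * (a ^ 2 * t ^ 3).
Proof.
  intros Ha Ht Hkp Hkd He1 He2 Hu1 Hu2 Hep Hem Hu.
  pose proof PI_gt2 as HPI.
  assert (Hb1 : Rabs e1 <= a * t) by (rewrite He1; apply e_bound; auto).
  assert (Hb2 : Rabs e2 <= a * t) by (rewrite He2; apply e_bound; auto).
  assert (Ht0 : 0 <= t) by lra.
  pose proof (e4_bound a t e1 Ha Ht0 Hb1) as F1.
  pose proof (e4_bound a t e2 Ha Ht0 Hb2) as F2.
  pose proof (e4_bound a t ep Ha Ht0 Hep) as F3.
  pose proof (e4_bound a t em Ha Ht0 Hem) as F4.
  pose proof (Dax_bound a e1 Ha) as G1. pose proof (Dax_bound a e2 Ha) as G2.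
  pose proof (Ddd_bound a ep Ha) as G3. pose proof (Ddd_bound a em Ha) as G4.
  pose proof (Ddpm_bound a e1 Ha) as G5. pose proof (Ddpm_bound a e2 Ha) as G6.
  apply Rabs_le_inv' in G5. apply Rabs_le_inv' in G6.
  pose proof (atan_sq_bound u1 t Hu1) as A1. pose proof (atan_sq_bound u2 t Hu2) as A2.
  apply Rabs_le_inv' in A1. apply Rabs_le_inv' in A2. apply Rabs_le_inv' in Hu.
  assert (Eq : 1 / 2 * kp * (Dax a e1 ^ 2 + Dax a e2 ^ 2)
        + 1 / 2 * kd * (Ddp a e1 ^ 2 + Ddp a e2 ^ 2 + Ddm a e1 ^ 2 + Ddm a e2 ^ 2
                        + Ddd a ep ^ 2 + Ddd a em ^ 2)
        - kd / (8 * PI ^ 2) * (a ^ 2 * t ^ 2) = 1 / 2 * kp * (Dax a e1 ^ 2 + Dax a e2 ^ 2)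
      + 1 / 2 * kd * ((Ddp a e1 ^ 2 + Ddm a e1 ^ 2 - e1 ^ 2) + (Ddp a e2 ^ 2 + Ddm a e2 ^ 2 - e2 ^ 2)
             + Ddd a ep ^ 2 + Ddd a em ^ 2)
      + kd * a ^ 2 / (8 * PI ^ 2) * ((atan u1 ^ 2 - u1 ^ 2) + (atan u2 ^ 2 - u2 ^ 2) + (u1 ^ 2 + u2 ^ 2 - t ^ 2))).
  { rewrite He1, He2. field. lra. }
  rewrite Eq.
  set (c := kd * a ^ 2 / (8 * PI ^ 2)).
  assert (Hc0 : 0 < c). { unfold c; apply Rdiv_lt_0_compat; apply Rmult_lt_0_compat; try lra; apply pow_lt; lra. }
  assert (Hc1 : c <= kd * a ^ 2 / 32).
  { unfold c. unfold Rdiv. apply Rmult_le_compat_l. nra'.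
    apply Rinv_le_contravar. lra. nra'. }
  set (T1 := Dax a e1 ^ 2 + Dax a e2 ^ 2).
  set (T2 := (Ddp a e1 ^ 2 + Ddm a e1 ^ 2 - e1 ^ 2) + (Ddp a e2 ^ 2 + Ddm a e2 ^ 2 - e2 ^ 2)
             + Ddd a ep ^ 2 + Ddd a em ^ 2).
  set (T3 := (atan u1 ^ 2 - u1 ^ 2) + (atan u2 ^ 2 - u2 ^ 2) + (u1 ^ 2 + u2 ^ 2 - t ^ 2)).
  set (w := a ^ 2 * t ^ 4).
  assert (Hw : w <= a ^ 2 * t ^ 3 / 4) by (unfold w; nra').
  assert (Hw0 : 0 <= w) by (unfold w; nra').
  assert (HT1 : 0 <= T1 <= 2 * w).
  { unfold T1. assert (0 <= Dax a e1 ^ 2) by nra'. assert (0 <= Dax a e2 ^ 2) by nra'. fold w in F1, F2. lra. }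
  assert (HT2 : - (8 * w) <= T2 <= 8 * w).
  { unfold T2. assert (0 <= Ddd a ep ^ 2) by nra'. assert (0 <= Ddd a em ^ 2) by nra'.
    fold w in F1, F2, F3, F4.
    assert (3 * e1 ^ 4 / a ^ 2 <= 3 * w) by (unfold Rdiv in *; lra).
    assert (3 * e2 ^ 4 / a ^ 2 <= 3 * w) by (unfold Rdiv in *; lra).
    lra. }
  assert (HT3 : - (264 * t ^ 3) <= T3 <= 264 * t ^ 3).
  { unfold T3. assert (t ^ 4 <= t ^ 3 / 4) by nra'. lra. }
  assert (HP1 : 0 <= kp * T1 <= kp * (2 * w)) by (split; nra').
  assert (HP2 : - (kd * (8 * w)) <= kd * T2 <= kd * (8 * w)) by (split; nra').
  assert (HP3 : - (c * (264 * t ^ 3)) <= c * T3 <= c * (264 * t ^ 3)) by (split; nra').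
  assert (HP4 : c * (264 * t ^ 3) <= kd * a ^ 2 / 32 * (264 * t ^ 3)) by (apply Rmult_le_compat_r; nra').
  assert (HP5 : kp * (2 * w) <= kp * (a ^ 2 * t ^ 3 / 2)) by nra'.
  assert (HP6 : kd * (8 * w) <= kd * (2 * (a ^ 2 * t ^ 3))) by nra'.
  apply Rabs_le. split; nra'.
Qed.

Lemma sumZ_lin f g h c m n : (forall l, f l = c * g l + h l) ->
  sumZ f m n = c * sumZ g m n + sumZ h m n.
Proof.
  intros H. revert m. induction n as [|n IH]; intros m; simpl; [ring|].
  rewrite H, IH. ring.
Qed.

Lemma part1 (a kp kd x0 y0 rho N : R)
  (ha : 0 < a) (hkp : 0 < kp) (hkd : 0 < kd) (hrho : 0 < rho) (hN : rho < N) :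
  E a kp kd x0 y0 rho N
    = 1 / (8 * PI ^ 2) * kd * a ^ 2 * zeta a x0 y0 rho N
      + sumA a x0 y0 rho N (r a kp kd x0 y0).
Proof.
  unfold E, zeta, sumA. apply sumZ_lin; intro l1. apply sumZ_lin; intro l2.
  unfold inA. destruct (Rlt_dec (rho * a) (modz a x0 y0 l1 l2)) as [H1|H1]; [|ring].
  destruct (Rlt_dec (modz a x0 y0 l1 l2) (N * a)) as [H2|H2]; [|ring].
  unfold r. destruct (modz_facts a x0 y0 l1 l2) as [HRR HR0].
  assert (HRp : 0 < modz a x0 y0 l1 l2) by nra.
  revert HRR HRp. unfold zre, zim. generalize (modz a x0 y0 l1 l2). intros R HRR HRp.
  pose proof PI_gt2.
  assert (Hs : (IZR l1 - x0 / a) ^ 2 + (IZR l2 - y0 / a) ^ 2 = (R * R) / a ^ 2).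
  { rewrite HRR. field. lra. }
  rewrite Hs. field. split; [lra|]. split; lra.
Qed.

Lemma part2 (a kp kd x0 y0 : R) (ha : 0 < a) (hkp : 0 < kp) (hkd : 0 < kd) :
  forall eta : R, 0 < eta ->
     exists M : R, forall l1 l2 : Z,
       M < modz a x0 y0 l1 l2 ->
       Rabs (r a kp kd x0 y0 l1 l2 * modz a x0 y0 l1 l2 ^ 2 / a ^ 2) < eta.
Proof.
  intros eta Heta.
  set (C := (kp + 10 * kd) * a ^ 3).
  assert (HC : 0 < C) by (unfold C; apply Rmult_lt_0_compat; [lra| apply pow_lt; lra]).
  exists (Rmax (4 * a) (C / eta)). intros l1 l2 HM.
  pose proof (Rmax_l (4 * a) (C / eta)). pose proof (Rmax_r (4 * a) (C / eta)).
  destruct (modz_facts a x0 y0 l1 l2) as [HRR HR0].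
  assert (HR4 : 4 * a <= modz a x0 y0 l1 l2) by lra.
  assert (HRC : C / eta < modz a x0 y0 l1 l2) by lra.
  assert (He1 := epsgen_formula a x0 y0 (l1 + 1)%Z l2 l1 l2 1 0 ha
     ltac:(lra) ltac:(lra) ltac:(unfold zre; rewrite plus_IZR; ring) ltac:(ring) HR4).
  assert (He2 := epsgen_formula a x0 y0 l1 (l2 + 1)%Z l1 l2 0 1 ha
     ltac:(lra) ltac:(lra) ltac:(ring) ltac:(unfold zim; rewrite plus_IZR; ring) HR4).
  assert (Hep := epsgen_formula a x0 y0 (l1 + 1)%Z (l2 + 1)%Z l1 l2 1 1 ha
     ltac:(lra) ltac:(lra) ltac:(unfold zre; rewrite plus_IZR; ring) ltac:(unfold zim; rewrite plus_IZR; ring) HR4).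
  assert (Hem := epsgen_formula a x0 y0 (l1 + 1)%Z (l2 - 1)%Z l1 l2 1 (-1) ha
     ltac:(lra) ltac:(lra) ltac:(unfold zre; rewrite plus_IZR; ring) ltac:(unfold zim; rewrite minus_IZR; ring) HR4).
  unfold r, F. cbv zeta. unfold Defs.eps1, Defs.eps2, Defs.epsp, Defs.epsm. rewrite He1, He2, Hep, Hem.
  revert HRR HR0 HR4 HRC.
  generalize (modz a x0 y0 l1 l2) (zre a x0 l1) (zim a y0 l2). intros R X Y HRR HR0 HR4 HRC.
  assert (HRp : 0 < R) by lra.
  set (t := a / R).
  assert (Ht : 0 < t <= 1 / 4).
  { unfold t. split. apply Rdiv_lt_0_compat; lra.
    apply Rmult_le_reg_r with R; auto. replace (a / R * R) with a by (field; lra). lra. }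
  assert (HtR : 4 * a / R = 4 * t) by (unfold t; field; lra).
  pose proof (u_bound a R X Y 1 0 ha HR4 HRR ltac:(lra) ltac:(lra)) as U1.
  pose proof (u_bound a R X Y 0 1 ha HR4 HRR ltac:(lra) ltac:(lra)) as U2.
  pose proof (u_bound a R X Y 1 1 ha HR4 HRR ltac:(lra) ltac:(lra)) as U3.
  pose proof (u_bound a R X Y 1 (-1) ha HR4 HRR ltac:(lra) ltac:(lra)) as U4.
  rewrite HtR in U1, U2, U3, U4.
  pose proof (e_bound a t _ ha U3) as B3. pose proof (e_bound a t _ ha U4) as B4.
  assert (HXY := abs_le_of_sq X Y R HR0 HRR). destruct HXY as [HX HY].
  assert (Hsq : Rabs ((a * (0 * X - 1 * Y) / (R ^ 2 + a * (1 * X + 0 * Y))) ^ 2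
                + (a * (1 * X - 0 * Y) / (R ^ 2 + a * (0 * X + 1 * Y))) ^ 2 - t ^ 2) <= 8 * t ^ 3).
  { replace (0 * X - 1 * Y) with (- Y) by ring. replace (1 * X + 0 * Y) with X by ring.
    replace (1 * X - 0 * Y) with X by ring. replace (0 * X + 1 * Y) with Y by ring.
    assert (S1 := sq_approx a R (R ^ 2 + a * X) (- Y) ha HR4).
    assert (S2 := sq_approx a R (R ^ 2 + a * Y) X ha HR4).
    replace (R ^ 2 + a * X - R ^ 2) with (a * X) in S1 by ring.
    replace (R ^ 2 + a * Y - R ^ 2) with (a * Y) in S2 by ring.
    rewrite Rabs_mult, (Rabs_pos_eq a) in S1, S2 by lra. rewrite Rabs_Ropp in S1.
    assert (0 <= Rabs X) by apply Rabs_pos. assert (0 <= Rabs Y) by apply Rabs_pos.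
    specialize (S1 ltac:(nra) HY). specialize (S2 ltac:(nra) HX).
    assert (Et : t ^ 2 = a ^ 2 * (- Y) ^ 2 / R ^ 4 + a ^ 2 * X ^ 2 / R ^ 4).
    { unfold t. assert (H4 : R ^ 4 = R ^ 2 * (X ^ 2 + Y ^ 2)) by (rewrite <- HRR; ring).
      rewrite H4. field_simplify_eq. ring. split; [nra|lra]. }
    assert (E3 : 4 * a ^ 3 / R ^ 3 = 4 * t ^ 3) by (unfold t; field; lra).
    rewrite E3 in S1, S2. rewrite Et.
    replace (8 * t ^ 3) with (4 * t ^ 3 + 4 * t ^ 3) by ring.
    eapply Rle_trans; [|apply Rplus_le_compat; [apply S1 | apply S2]].
    eapply Rle_trans; [|apply Rabs_triang]. right. f_equal. ring. }
  pose proof (key a kp kd t _ _ _ _ _ _ ha Ht hkp hkd eq_refl eq_refl U1 U2 B3 B4 Hsq) as K.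
  assert (Ea : a ^ 4 / R ^ 2 = a ^ 2 * t ^ 2) by (unfold t; field; lra).
  rewrite Ea.
  match goal with |- Rabs (?r * _ / _) < _ => set (rr := r) in * end.
  assert (Hr : rr * R ^ 2 / a ^ 2 = rr / t ^ 2) by (unfold t; field; lra).
  rewrite Hr. clearbody rr.
  apply Rle_lt_trans with ((kp + 10 * kd) * (a ^ 2 * t ^ 3) / t ^ 2).
  { apply div_bound. apply pow_lt; lra.
    replace ((kp + 10 * kd) * (a ^ 2 * t ^ 3) / t ^ 2 * t ^ 2) with ((kp + 10 * kd) * (a ^ 2 * t ^ 3))
      by (field; lra). exact K. }
  replace ((kp + 10 * kd) * (a ^ 2 * t ^ 3) / t ^ 2) with (C / R) by (unfold C, t; field; lra).
  apply Rmult_lt_reg_r with (R / eta). apply Rdiv_lt_0_compat; lra.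
  replace (C / R * (R / eta)) with (C / eta) by (field; lra).
  replace (eta * (R / eta)) with R by (field; lra). lra.
Qed.

Theorem theorem5p2 (a kp kd x0 y0 rho N : R)
  (ha : 0 < a) (hkp : 0 < kp) (hkd : 0 < kd) (hrho : 0 < rho) (hN : rho < N) :
  E a kp kd x0 y0 rho N
    = 1 / (8 * PI ^ 2) * kd * a ^ 2 * zeta a x0 y0 rho N
      + sumA a x0 y0 rho N (r a kp kd x0 y0)
  /\
  (forall eta : R, 0 < eta ->
     exists M : R, forall l1 l2 : Z,
       M < modz a x0 y0 l1 l2 ->
       Rabs (r a kp kd x0 y0 l1 l2 * modz a x0 y0 l1 l2 ^ 2 / a ^ 2) < eta).
Proof.
  split.
  - apply part1; auto.
  - apply part2; auto.
Qed.
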